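(* Let $k$ be a field, $V$ an $n$-dimensional $k$-vector space, $S=\operatorname{Sym}V=k[x_1,\dots,x_n]$. If $f\in S_{d+1}$ is an LDS form of degree $d+1\geq 3$, then $f$ is not GIT semistable with respect to the standard action of $\mathrm{SL}(n)=\mathrm{SL}(V)$ on $S_{d+1}$.
   Context: A form $f\in S_{d+1}$ is called an LDS form if, after a linear change of variables, it can be written as $f(x_1,\dots,x_n)=\sum_{i=1}^{\ell} x_i\,\frac{\partial H(x_{\ell+1},\dots,x_{2\ell})}{\partial x_{\ell+i}}+G(x_{\ell+1},\dots,x_n)$, where $H$ and $G$ are forms of degree $d+1$ in $\ell$ and $n-\ell$ variables respectively. *)

(* Defs.v *)
From HB Require Import structures.
From mathcomp Require Import all_boot all_order all_algebra.
From mathcomp Require Import mpoly.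
Set Implicit Arguments. Unset Strict Implicit. Unset Printing Implicit Defensive.
Import Order.TTheory GRing.Theory.
Local Open Scope ring_scope.

(* Monomials of degree exactly d+1 in n variables: they index the coordinates
   (coefficients) of the space S_{d+1} of forms of degree d+1. *)
Definition Mon (n d : nat) := {m : 'X_{1..n < d.+2} | mdeg m == d.+1}.

Definition coeffs (K : fieldType) (n d : nat) (f : {mpoly K[n]})
  : 'I_#|{: Mon n d}| -> K :=
  fun j => f@_(val (val (enum_val j))).
Arguments coeffs {K n} d f _.

Definition act (K : fieldType) (n : nat) (g : 'M[K]_n) (f : {mpoly K[n]})
  : {mpoly K[n]} :=
  f \mPo [tuple \sum_(j < n) g i j *: 'X_j | i < n].

(* F, a polynomial function (with coefficients in k) on S_{d+1}, is invariant
   under SL(n) as an algebraic group: invariance is required on K-points for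
   every field extension K of k (this is what rules out spurious invariants
   of SL_n(k) when k is finite). *)
Definition SL_invariant (k : fieldType) (n d : nat)
  (F : {mpoly k[#|{: Mon n d}|]}) : Prop :=
  forall (K : fieldType) (iota : {rmorphism k -> K}) (g : 'M[K]_n),
    \det g = 1 ->
    forall h : {mpoly K[n]}, h \is (d.+1).-homog ->
      (map_mpoly iota F).@[coeffs d (act g h)]
      = (map_mpoly iota F).@[coeffs d h].

Definition semistable (k : fieldType) (n d : nat) (f : {mpoly k[n]}) : Prop :=
  exists m : nat, (0 < m)%N /\
    exists F : {mpoly k[#|{: Mon n d}|]},
      F \is m.-homog /\ SL_invariant F /\ F.@[coeffs d f] != 0.

(* LDS forms of degree d+1 (0-based variable indices: x_1..x_l are indices
   0..l-1, x_{l+1}..x_{2l} are l..2l-1, x_{l+1}..x_n are l..n-1). *)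
Definition LDS (k : fieldType) (n d : nat) (f : {mpoly k[n]}) : Prop :=
  exists l : nat, (0 < l)%N /\ (2 * l <= n)%N /\
  exists A : 'M[k]_n, A \in unitmx /\
  exists H G : {mpoly k[n]},
    H \is (d.+1).-homog /\ G \is (d.+1).-homog /\
    (forall m, m \in msupp H -> forall i : 'I_n, m i != 0%N -> (l <= i < 2 * l)%N) /\
    (forall m, m \in msupp G -> forall i : 'I_n, m i != 0%N -> (l <= i)%N) /\
    f = act A (\sum_(i < n) \sum_(j < n | (i < l)%N && (j == l + i :> nat))
                  'X_i * mderiv j H + G).

(* Main.v *)
Require Import Defs.
From HB Require Import structures.
From mathcomp Require Import all_boot all_order all_algebra.
From mathcomp Require Import mpoly.
From mathcomp Require Import zify.
Module Aux.
Set Implicit Arguments. Unset Strict Implicit. Unset Printing Implicit Defensive.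
Import Order.TTheory GRing.Theory Num.Theory.
Local Open Scope ring_scope.

Definition actR (R : comNzRingType) (n : nat) (g : 'M[R]_n) (f : {mpoly R[n]})
  : {mpoly R[n]} :=
  f \mPo [tuple \sum_(j < n) g i j *: 'X_j | i < n].

Lemma actE (K : fieldType) n (g : 'M[K]_n) f : act g f = actR g f.
Proof. by []. Qed.

Lemma comp_mpolyA_ (R : comNzRingType) n (p : {mpoly R[n]}) (lq lr : n.-tuple {mpoly R[n]}) :
  (p \mPo lq) \mPo lr = p \mPo [tuple (tnth lq i \mPo lr) | i < n].
Proof.
rewrite (comp_mpolyEX p lq) (comp_mpolyEX p [tuple _ | i < n]) (raddf_sum (comp_mpoly lr)).
apply: eq_bigr => m _.
rewrite /= comp_mpolyZ; congr (_ *: _).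
rewrite !comp_mpolyX (rmorph_prod (comp_mpoly lr)); apply: eq_bigr => i _.
by rewrite (rmorphXn (comp_mpoly lr)) tnth_mktuple.
Qed.

Lemma actRM (R : comNzRingType) n (A g : 'M[R]_n) p :
  actR g (actR A p) = actR (A *m g) p.
Proof.
rewrite /actR comp_mpolyA_; congr (_ \mPo _); apply: eq_from_tnth => i.
rewrite !tnth_mktuple raddf_sum /=.
under eq_bigr do rewrite comp_mpolyZ comp_mpolyXU -tnth_nth tnth_mktuple scaler_sumr.
rewrite exchange_big /=; apply: eq_bigr => k _.
by rewrite mxE scaler_suml; apply: eq_bigr => j _; rewrite scalerA.
Qed.

Lemma map_actR (R S : comNzRingType) (phi : {rmorphism R -> S}) n (M : 'M[R]_n) p :
  map_mpoly phi (actR M p) = actR (map_mx phi M) (map_mpoly phi p).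
Proof.
rewrite /actR; elim/mpolyind: p => [|c m p _ _ IH]; first by rewrite !raddf0.
rewrite !raddfD /= IH; congr (_ + _).
rewrite comp_mpolyZ !map_mpolyZ map_mpolyX comp_mpolyZ; congr (_ *: _).
rewrite !comp_mpolyX rmorph_prod /=; apply: eq_bigr => i _.
rewrite rmorphXn /= !tnth_mktuple rmorph_sum /=; congr (_ ^+ _).
by apply: eq_bigr => j _; rewrite map_mpolyZ map_mpolyX mxE.
Qed.

Lemma map_meval (R S : comNzRingType) (phi : {rmorphism R -> S}) n (P : {mpoly R[n]}) v :
  (map_mpoly phi P).@[fun i => phi (v i)] = phi P.@[v].
Proof.
elim/mpolyind: P => [|c m p _ _ IH].
  rewrite raddf0 !mevalE msupp0 big_nil big1 ?rmorph0 // => m0 _; by rewrite mcoeff0 mul0r.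
rewrite raddfD /= !mevalD IH rmorphD; congr (_ + _).
rewrite map_mpolyZ map_mpolyX !mevalZ !mevalX rmorphM rmorph_prod /=; congr (_ * _).
by apply: eq_bigr => i _; rewrite rmorphXn.
Qed.


Lemma actR_diag (R : comNzRingType) n (r : 'I_n -> R) (p : {mpoly R[n]}) :
  actR (diag_mx (\row_i r i)) p =
  \sum_(m <- msupp p) (p@_m * \prod_i r i ^+ m i) *: 'X_[m].
Proof.
rewrite /actR comp_mpolyEX; apply: eq_bigr => m _.
rewrite -scalerA; congr (_ *: _).
rewrite comp_mpolyX.
transitivity (\prod_i ((r i)%:MP * 'X_i) ^+ m i).
  apply: eq_bigr => i _; congr (_ ^+ _).
  rewrite tnth_mktuple (bigD1 i) //= big1 ?addr0.
    by rewrite mxE mxE eqxx mulr1n mul_mpolyC.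
  by move=> j /negbTE ji; rewrite mxE eq_sym ji mulr0n scale0r.
under eq_bigr do rewrite exprMn.
rewrite big_split /= -mpolyXE_id -mul_mpolyC; congr (_ * _).
by rewrite rmorph_prod /=; apply: eq_bigr => i _; rewrite rmorphXn.
Qed.

Lemma prod_exprz (K : fieldType) (t : K) n (z : 'I_n -> int) (m : 'I_n -> nat) :
  t != 0 -> \prod_i (t ^ z i) ^+ m i = t ^ (\sum_i z i * (m i)%:Z).
Proof.
move=> t0.
rewrite (big_morph (fun x : int => t ^ x) (fun a b => expfzDr a b t0) (expr0z t)).
by apply: eq_bigr => i _; rewrite exprnP exprz_exp.
Qed.


Definition wn (n l : nat) (i : nat) : int :=
  if (i < l)%N then - ((n.+1 + (n - 2 * l))%N%:Z) else if (i < 2 * l)%N then (n.+1)%:Z else l%:Z.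

Definition weight (n l : nat) (m : 'X_{1..n}) : int := \sum_(i < n) wn n l i * (m i)%:Z.

Lemma sum_wn n l : (2 * l <= n)%N -> \sum_(i < n) wn n l i = 0.
Proof.
move=> hl.
rewrite -(big_mkord xpredT (wn n l)) (big_cat_nat (n:=l)) //=; last by lia.
rewrite (big_cat_nat (m := l) (n := (2 * l)%N)) //=; try lia.
rewrite (eq_big_nat (m := 0%N) (n := l) _ _ (F2 := fun _ => - ((n.+1 + (n - 2 * l))%N%:Z))); last first.
  by move=> i /andP [_ hi]; rewrite /wn hi.
rewrite (eq_big_nat (m := l) (n := (2 * l)%N) _ _ (F2 := fun _ => (n.+1)%:Z)); last first.
  by move=> i /andP [hi1 hi2]; rewrite /wn hi2 ltnNge hi1.
rewrite (eq_big_nat (m := (2 * l)%N) (n := n) _ _ (F2 := fun _ => l%:Z)); last first.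
  move=> i /andP [hi1 hi2]; rewrite /wn ltnNge (leq_trans _ hi1) /=; last by lia.
  by rewrite ltnNge hi1.
rewrite !sumr_const_nat subn0.
have -> : (2 * l - l = l)%N by lia.
rewrite !pmulrn !mulrzz -!PoszM mulNr addrC; apply/eqP; rewrite subr_eq0 -PoszD.
by rewrite eqz_nat mulnDl [(l * _)%N]mulnC.
Qed.


Lemma weightD n l (m1 m2 : 'X_{1..n}) : weight l (m1 + m2) = weight l m1 + weight l m2.
Proof.
rewrite /weight -big_split /=; apply: eq_bigr => i _.
by rewrite mnmDE PoszD mulrDr.
Qed.

Lemma weightU n l (i : 'I_n) : weight l U_(i) = wn n l i.
Proof.
rewrite /weight (bigD1 i) //= big1 ?addr0 ?mnm1E ?eqxx ?mulr1 //.
by move=> j ji; rewrite mnm1E eq_sym (negbTE ji) mulr0.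
Qed.

Lemma weight_ge_mdeg n l (m : 'X_{1..n}) : (0 < l)%N ->
  (forall i : 'I_n, m i != 0%N -> (l <= i)%N) -> (mdeg m)%:Z <= weight l m.
Proof.
move=> l0 hm; rewrite mdegE /weight (big_morph Posz PoszD (erefl (Posz 0))).
apply: ler_sum => i _.
have [->|mi0] := eqVneq (m i) 0%N; first by rewrite mulr0.
have li := hm i mi0.
rewrite /wn ltnNge li /=.
case: ifP => _; rewrite ler_pMl //; lia.
Qed.

Lemma weight_mid n l (m : 'X_{1..n}) :
  (forall i : 'I_n, m i != 0%N -> (l <= i < 2 * l)%N) -> weight l m = (n.+1 * mdeg m)%N%:Z.
Proof.
move=> hm; rewrite mdegE big_distrr /= (big_morph Posz PoszD (erefl (Posz 0))) /weight.
apply: eq_bigr => i _.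
have [->|mi0] := eqVneq (m i) 0%N; first by rewrite mulr0 muln0.
have /andP [li il] := hm i mi0.
by rewrite /wn ltnNge li il /= PoszM.
Qed.


Lemma f1_coef (k : fieldType) n d l (H G : {mpoly k[n]}) m :
  (2 <= d)%N -> (0 < l)%N -> (2 * l <= n)%N ->
  H \is (d.+1).-homog -> G \is (d.+1).-homog ->
  (forall m, m \in msupp H -> forall i : 'I_n, m i != 0%N -> (l <= i < 2 * l)%N) ->
  (forall m, m \in msupp G -> forall i : 'I_n, m i != 0%N -> (l <= i)%N) ->
  weight l m <= 0 ->
  (\sum_(i < n) \sum_(j < n | (i < l)%N && (j == l + i :> nat))
                  'X_i * mderiv j H + G)@_m = 0.
Proof.
move=> d2 l0 l2n hH hG sH sG wm.
rewrite mcoeffD raddf_sum /= big1 ?add0r.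
  apply: memN_msupp_eq0; apply/negP => mG.
  have := weight_ge_mdeg l0 (sG _ mG).
  rewrite (dhomog_mf hG mG) => h.
  by have := le_trans h wm.
move=> i _; rewrite raddf_sum /= big1 // => j /andP [il /eqP jE].
apply: memN_msupp_eq0; apply/negP; rewrite mulrC.
rewrite (perm_mem (msuppMX _ _)) => /mapP [m' m'in mE].
have hm' : (m' + U_(j))%MM \in msupp H.
  move: m'in; rewrite !mcoeff_msupp mcoeff_mderiv.
  by apply: contraNneq => ->; rewrite mul0rn.
have dm' : mdeg m' = d.
  have := dhomog_mf hH hm'; move=> hh; have hh' : (mdeg (m' + U_(j))%MM = d.+1)%N := hh. move: hh'. rewrite mdegD mdeg1; lia.
have wm' : weight l m' = (n.+1 * d)%N%:Z.
  rewrite -dm'; apply: weight_mid => i' mi'.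
  apply: (sH _ hm'); rewrite mnmDE; lia.
move: wm; rewrite mE weightD weightU wm' /wn il.
have : (n.+1 * 2 <= n.+1 * d)%N by rewrite leq_mul2l d2 orbT.
lia.
Qed.


Lemma meval_zero_homog (k : comNzRingType) n m (F : {mpoly k[n]}) :
  (0 < m)%N -> F \is m.-homog -> F.@[fun _ => 0] = 0.
Proof.
move=> m0 hF; rewrite mevalE big_seq big1 // => mm mmF.
have := dhomog_mf hF mmF => hd.
have : (mdeg mm != 0)%N by rewrite [mdeg mm]hd -lt0n.
rewrite mdeg_eq0 => /eqP nz.
have [i mi] : exists i, mm i != 0%N.
  apply/existsP; apply: contraT => h; exfalso; apply: nz; apply/mnmP => i.
  rewrite mnm0E; apply/eqP; move: h; rewrite negb_exists => /forallP /(_ i).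
  by rewrite negbK.
by rewrite (bigD1 i) //= expr0n (negbTE mi) mul0r mulr0.
Qed.

Lemma actR0 (R : comNzRingType) n (M : 'M[R]_n) : actR M 0 = 0.
Proof. by rewrite /actR raddf0. Qed.

Lemma key (k K : fieldType) (tf : {rmorphism {poly k} -> K}) (iota : {rmorphism k -> K})
  (tf_inj : injective tf) (iotaE : forall c, iota c = tf c%:P)
  N m (F : {mpoly k[N]}) (v : 'I_N -> k) (qv : 'I_N -> {poly k}) :
  (0 < m)%N -> F \is m.-homog -> (forall j, (qv j).[0] = 0) ->
  (map_mpoly iota F).@[fun j => tf (qv j)] = iota (F.@[v]) -> F.@[v] = 0.
Proof.
move=> m0 hF q0.
have FF : map_mpoly iota F = map_mpoly tf (map_mpoly polyC F).
  by apply/mpolyP => mm; rewrite !mcoeff_map_mpoly; exact: iotaE.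
rewrite FF (map_meval tf (map_mpoly polyC F) qv) => E0.
have /tf_inj E1 := etrans E0 (iotaE _).
rewrite -[F.@[v]](hornerC _ 0) -E1 -horner_evalE -(map_meval (horner_eval 0)).
have -> : map_mpoly (horner_eval 0) (map_mpoly polyC F) = F.
  by apply/mpolyP => mm; rewrite !mcoeff_map_mpoly; exact: hornerC.
rewrite (meval_eq (v2 := fun _ => 0)); first exact: (meval_zero_homog m0 hF).
by move=> j; exact: q0.
Qed.

Lemma map_mpoly_sumZX (R S : comNzRingType) (phi : {rmorphism R -> S}) n
  (s : seq 'X_{1..n}) (c : 'X_{1..n} -> R) :
  map_mpoly phi (\sum_(m <- s) c m *: 'X_[m]) = \sum_(m <- s) phi (c m) *: 'X_[m].
Proof.
elim: s => [|x s IH]; first by rewrite !big_nil raddf0.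
by rewrite !big_cons raddfD /= IH map_mpolyZ map_mpolyX.
Qed.


Definition coeffsR (R : nzRingType) (n d : nat) (p : {mpoly R[n]})
  : 'I_#|{: Mon n d}| -> R := fun j => p@_(val (val (enum_val j))).
Arguments coeffsR {R n} d p _.

Lemma main_abs (k K : fieldType) (tf : {rmorphism {poly k} -> K}) (iota : {rmorphism k -> K})
  (tf_inj : injective tf) (iotaE : forall c, iota c = tf c%:P)
  (n d l : nat) (A : 'M[k]_n) (H G f : {mpoly k[n]}) (m : nat)
  (F : {mpoly k[#|{: Mon n d}|]}) :
  (2 <= d)%N -> (0 < l)%N -> (2 * l <= n)%N -> A \in unitmx ->
  H \is (d.+1).-homog -> G \is (d.+1).-homog ->
  (forall m, m \in msupp H -> forall i : 'I_n, m i != 0%N -> (l <= i < 2 * l)%N) ->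
  (forall m, m \in msupp G -> forall i : 'I_n, m i != 0%N -> (l <= i)%N) ->
  f = act A (\sum_(i < n) \sum_(j < n | (i < l)%N && (j == l + i :> nat))
                  'X_i * mderiv j H + G) ->
  f \is (d.+1).-homog -> (0 < m)%N -> F \is m.-homog ->
  (forall g : 'M[K]_n, \det g = 1 -> forall h : {mpoly K[n]}, h \is (d.+1).-homog ->
      (map_mpoly iota F).@[coeffs d (act g h)] = (map_mpoly iota F).@[coeffs d h]) ->
  F.@[coeffs d f] = 0.
Proof.
move=> d2 l0 l2n Au hH hG sH sG fE hf m0 hF invF.
move: fE.
set f1 := (X in f = act A X) => fE.
have wpos : forall mm, mm \in msupp f1 -> 0 < weight l mm.
  move=> mm; rewrite mcoeff_msupp ltNge; apply: contra => w0.
  apply/eqP; rewrite /f1; exact: (f1_coef d2 l0 l2n hH hG sH sG w0).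
pose t : K := tf 'X.
have t0 : t != 0.
  apply/eqP => E; have := E; rewrite /t -(rmorph0 tf) => /tf_inj /eqP.
  by rewrite polyX_eq0.
pose D : 'M[K]_n := diag_mx (\row_i t ^ wn n l i).
pose A' := map_mx iota A.
have A'u : A' \in unitmx by rewrite map_unitmx.
pose g := invmx A' *m D *m A'.
have detg : \det g = 1.
  rewrite !det_mulmx det_inv det_diag mulrC mulrA mulrV ?mul1r; last by rewrite -unitmxE.
  rewrite (eq_bigr (fun i : 'I_n => (t ^ wn n l i) ^+ 1%N)); last by move=> i _; rewrite mxE expr1.
  have sw : \sum_(i < n) wn n l i * (1%N)%:Z = 0.
    by rewrite (eq_bigr (fun i : 'I_n => wn n l i)) ?(sum_wn l2n) => [|i _]; rewrite ?mulr1.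
  by rewrite (prod_exprz _ _ t0) sw expr0z.
pose h := map_mpoly iota f.
have hh : h \is (d.+1).-homog.
  by rewrite dhomogE (perm_all _ (msupp_map_mpoly _ (fmorph_inj iota))) -dhomogE.
have := invF g detg h hh.
pose Q : {mpoly {poly k}[n]} :=
  \sum_(mm <- msupp f1) ((f1@_mm)%:P * 'X^(absz (weight l mm))) *: 'X_[mm].
have QD : actR D (map_mpoly iota f1) = map_mpoly tf Q.
  rewrite /D actR_diag (perm_big _ (msupp_map_mpoly f1 (fmorph_inj iota))) /Q map_mpoly_sumZX.
  rewrite !big_seq; apply: eq_bigr => mm mmin.
  congr (_ *: _).
  rewrite mcoeff_map_mpoly.
  rewrite (prod_exprz _ _ t0).
  have -> : \sum_(i < n) wn n l i * (mm i)%:Z = (absz (weight l mm))%:Z.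
    by rewrite abszE gtr0_norm ?wpos.
  rewrite rmorphM rmorphXn; congr (_ * _); first exact: iotaE.
have Q0 : map_mpoly (horner_eval 0) Q = 0.
  rewrite /Q map_mpoly_sumZX big_seq big1 // => mm mmin.
  have N0 : (absz (weight l mm) != 0)%N by rewrite absz_eq0 lt0r_neq0 ?wpos.
  rewrite rmorphM rmorphXn [X in _ * X ^+ _](_ : _ = 0); last exact: hornerX.
  by rewrite expr0n (negbTE N0) mulr0 scale0r.
pose A'' := map_mx polyC A.
have AA : A' = map_mx tf A'' by apply/matrixP => i j; rewrite !mxE iotaE.
have L1 : actR g h = map_mpoly tf (actR A'' Q).
  rewrite /h fE actE map_actR actRM.
  have -> : A' *m g = D *m A' by rewrite /g !mulmxA (mulmxV A'u) mul1mx.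
  rewrite -actRM QD AA; exact/esym/map_actR.
pose P := actR A'' Q.
rewrite (meval_eq (v1 := coeffs d (act g h)) (v2 := fun j => tf (coeffsR d P j))); last first.
  by move=> j; rewrite /coeffs actE L1 mcoeff_map_mpoly.
rewrite (meval_eq (v1 := coeffs d h) (v2 := fun j => iota (coeffs d f j))); last first.
  by move=> j; rewrite /coeffs /h mcoeff_map_mpoly.
rewrite map_meval.
apply: (key tf_inj iotaE m0 hF).
move=> j; rewrite /coeffsR /P.
have := congr1 (mcoeff (val (val (enum_val j)))) (map_actR (horner_eval 0) A'' Q).
rewrite Q0 actR0 mcoeff0 mcoeff_map_mpoly; exact.
Qed.

End Aux.
Import Aux.

Theorem lemma1p4 (k : fieldType) (n d : nat) (f : {mpoly k[n]}) :
  (2 <= d)%N -> f \is (d.+1).-homog -> LDS d f -> ~ semistable d f.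
Proof.
move=> d2 hf [l [l0 [l2n [A [Au [H [G [hH [hG [sH [sG fE]]]]]]]]]]].
move=> [m [m0 [F [hF [invF nz]]]]].
move/eqP: nz; apply.
have tinj : injective (@tofrac {poly k}).
  by move=> x y /eqP; rewrite tofrac_eq => /eqP.
exact: (Aux.main_abs (K := {fraction {poly k}}) (tf := @tofrac _)
  (iota := (@tofrac _) \o polyC) tinj (fun c => erefl) d2 l0 l2n Au hH hG sH sG fE hf m0 hF
  (fun g dg h hh => invF _ _ g dg h hh)).
Qed.
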